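(* Let $\mathcal A$ be a unital associative algebra over $\mathbb C$, $L\ge0$, and let $A,B,C\in\mathcal A$ satisfy $[A,B]=C$ and $[A,C]=\sum_{i=1}^{L+1}\alpha_iA^i+\delta B+\epsilon+\beta\{A,B\}$. Define numbers $\bar x_{i,j}$ ($j\ge1$, $0\le i\le j-1$) and $\bar y_{i,j}$ ($j\ge1$, $0\le i\le j$) by $\bar x_{0,1}=1$, $\bar y_{0,1}=0$, $\bar y_{1,1}=1$ and, for $j\ge2$, $$\bar x_{i,j}=\bar x_{i-1,j-1}+\beta\bar x_{i,j-1}+\bar y_{i,j-1},\qquad \bar y_{i,j}=\delta\bar x_{i,j-1}+2\beta\bar x_{i-1,j-1}+\bar y_{i-1,j-1},$$ with the conventions $\bar x_{-1,j}=\bar y_{-1,j}=0$ and $\bar x_{j,j}=\bar x_{j+1,j}=0$ for all $j\ge1$. Then for all integers $i>j\ge1$, $$A^iBA^j-A^jBA^i=\sum_{k=0}^{j}\bar y_{k,j}[A^{i+k},B]-\sum_{k=0}^{j-1}\bar x_{k,j}\{A^{i+k},C\}.$$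
   Context: $[X,Y]=XY-YX$, $\{X,Y\}=XY+YX$, $A^0=1$. *)

(* Defs.v *)
From HB Require Import structures.
From mathcomp Require Import all_boot all_order all_algebra all_field.
Set Implicit Arguments. Unset Strict Implicit. Unset Printing Implicit Defensive.
Import Order.TTheory GRing.Theory Num.Theory.
Local Open Scope ring_scope.

Definition comm (R : pzRingType) (x y : R) : R := x * y - y * x.
Definition acomm (R : pzRingType) (x y : R) : R := x * y + y * x.

Definition prevc (f : nat -> algC) (i : nat) : algC :=
  match i with 0 => 0 | i'.+1 => f i' end.

(* xy beta delta j = (fun i => xbar_{i,j}, fun i => ybar_{i,j}), for j >= 1.
   Conventions: xbar_{i,j} = 0 for i >= j, ybar_{i,j} = 0 for i > j,
   xbar_{-1,j} = ybar_{-1,j} = 0.  The value at j = 0 is unused. *)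
Fixpoint xy (beta delta : algC) (j : nat) : (nat -> algC) * (nat -> algC) :=
  match j with
  | 0 => (fun _ => 0, fun _ => 0)
  | j1.+1 =>
    match j1 with
    | 0 => (fun i => if i == 0%N then 1 else 0, fun i => if i == 1%N then 1 else 0)
    | _.+1 =>
      let p := xy beta delta j1 in
      (fun i => if (i < j)%N then prevc p.1 i + beta * p.1 i + p.2 i else 0,
       fun i => if (i <= j)%N then delta * p.1 i + 2 * beta * prevc p.1 i + prevc p.2 i
                else 0)
    end
  end.

Definition xbar (beta delta : algC) (i j : nat) : algC := (xy beta delta j).1 i.
Definition ybar (beta delta : algC) (i j : nat) : algC := (xy beta delta j).2 i.

(* Main.v *)
Require Import Defs.
From HB Require Import structures.
From mathcomp Require Import all_boot all_order all_algebra all_field.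
From mathcomp Require Import ring zify.
Import Order.TTheory GRing.Theory Num.Theory.
Local Open Scope ring_scope.

Fixpoint XY (b d : algC) (j : nat) : (nat -> algC) * (nat -> algC) :=
  match j with
  | 0 => (fun _ => 0, fun i => if i == 0%N then 1 else 0)
  | j'.+1 => let p := XY b d j' in
     (fun i => prevc p.1 i + b * p.1 i + p.2 i,
      fun i => d * p.1 i + 2 * b * prevc p.1 i + prevc p.2 i)
  end.
Definition Xc b d j := (XY b d j).1.
Definition Yc b d j := (XY b d j).2.
Definition Uc b d j k := - (d * Xc b d j k + 2 * b * prevc (Xc b d j) k).
Definition Vc b d j k := b * Xc b d j k + Yc b d j k.

Lemma Xc_S b d j k : Xc b d j.+1 k = prevc (Xc b d j) k + b * Xc b d j k + Yc b d j k.
Proof. by []. Qed.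
Lemma Yc_S b d j k : Yc b d j.+1 k =
  d * Xc b d j k + 2 * b * prevc (Xc b d j) k + prevc (Yc b d j) k.
Proof. by []. Qed.

Lemma vanish b d j k : ((j <= k)%N -> Xc b d j k = 0) /\ ((j < k)%N -> Yc b d j k = 0).
Proof.
elim: j k => [|j IH] k.
  by split => //; case: k.
case: k => [|k]; first by split.
have [H1 H2] := IH k. have [H3 H4] := IH k.+1.
split => hk; rewrite ?Xc_S ?Yc_S /=.
- by rewrite H1 // H3 ?H4 // ?mulr0 ?addr0 // ltnW.
- rewrite H3 ?H2 ?H1 ?mulr0 ?addr0 //; lia.
Qed.

Lemma prevc_ext (f g : nat -> algC) k : (forall i, f i = g i) -> prevc f k = prevc g k.
Proof. by case: k => //= k ->. Qed.

Lemma agree b d j : forall k, xbar b d k j.+1 = Xc b d j.+1 k /\ ybar b d k j.+1 = Yc b d j.+1 k.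
Proof.
elim: j => [|j IH] k.
  rewrite /xbar /ybar Xc_S Yc_S /=.
  by case: k => [|[|k]] /=; split; rewrite ?mulr0 ?addr0 ?add0r.
rewrite /xbar /ybar /=.
have e1 : forall i, (xy b d j.+1).1 i = Xc b d j.+1 i by move=> i; case: (IH i).
have e2 : forall i, (xy b d j.+1).2 i = Yc b d j.+1 i by move=> i; case: (IH i).
split.
- case: ifP => hk.
    by rewrite Xc_S e1 e2 (prevc_ext _ _ k e1).
  by rewrite (proj1 (vanish b d j.+2 k)) // leqNgt hk.
- case: ifP => hk.
    by rewrite Yc_S e1 (prevc_ext _ _ k e1) (prevc_ext _ _ k e2).
  by rewrite (proj2 (vanish b d j.+2 k)) // ltnNge hk.
Qed.

Definition T (R : pzRingType) (A X : R) (i j : nat) := A^+i * X * A^+j - A^+j * X * A^+i.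
Definition P (R : pzRingType) (A X : R) (i j : nat) := A^+i * X * A^+j + A^+j * X * A^+i.

Arguments T {R}.
Arguments P {R}.

Lemma sandB (R : pzRingType) (A X : R) a b :
  A^+a * (A * X - X * A) * A^+b = A^+a.+1 * X * A^+b - A^+a * X * A^+b.+1.
Proof. by rewrite mulrBr mulrBl exprSr exprS !mulrA. Qed.
Lemma sandD (R : pzRingType) (A X : R) a b :
  A^+a * (A * X + X * A) * A^+b = A^+a.+1 * X * A^+b + A^+a * X * A^+b.+1.
Proof. by rewrite mulrDr mulrDl exprSr exprS !mulrA. Qed.

Lemma zm1 (Z : zmodType) (p q r s : Z) : q - r = (p - s) - ((p - q) + (r - s)).
Proof. by rewrite opprD !opprB addrACA (addrC p) subrK addKr. Qed.
Lemma zm2 (Z : zmodType) (p q r s : Z) : (p + q) - (r + s) = (p - s) + (q - r).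
Proof. by rewrite opprD (addrC (-r)) addrACA. Qed.
Lemma zm3 (Z : zmodType) (p q r s : Z) : (p - q) - (r - s) = (p + s) - (q + r).
Proof. by rewrite opprB opprD addrACA. Qed.

Lemma R1 (R : pzRingType) (A B : R) i j :
  T A B i j.+1 = T A B i.+1 j - P A (A * B - B * A) i j.
Proof. rewrite /T /P !sandB; exact: zm1. Qed.

Lemma TD (R : pzRingType) (A X Y : R) i j : T A (X + Y) i j = T A X i j + T A Y i j.
Proof. by rewrite /T !mulrDr !mulrDl opprD addrACA. Qed.
Lemma TZ (W : algType algC) (A X : W) c i j : T A (c *: X) i j = c *: T A X i j.
Proof. by rewrite /T -!scalerAr -!scalerAl scalerBr. Qed.
Lemma T0 (R : pzRingType) (A q : R) i j : GRing.comm q A -> T A q i j = 0.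
Proof.
move=> hq; rewrite /T -!mulrA (commrX j hq) (commrX i hq) !mulrA -!exprD.
by rewrite addnC subrr.
Qed.
Lemma TAB (R : pzRingType) (A X : R) i j :
  T A (A * X + X * A) i j = T A X i.+1 j + T A X i j.+1.
Proof. rewrite /T !sandD; exact: zm2. Qed.
Lemma TP (R : pzRingType) (A X : R) i j :
  T A (A * X - X * A) i j = P A X i.+1 j - P A X i j.+1.
Proof. rewrite /T /P !sandB; exact: zm3. Qed.

Lemma R2 (W : algType algC) (L : nat) (alpha : nat -> algC)
    (beta delta eps : algC) (A B C : W) :
  comm A C = \sum_(1 <= i < L.+2) alpha i *: A ^+ i + delta *: B + eps%:A
             + beta *: acomm A B -> forall i j,
  P A C i j.+1 = P A C i.+1 j - delta *: T A B i j
                 - beta *: (T A B i.+1 j + T A B i j.+1).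
Proof.
move=> hC i j.
have h := TP _ A C i j.
change (T A (comm A C) i j = P A C i.+1 j - P A C i j.+1) in h.
have c1 : GRing.comm (\sum_(1 <= i < L.+2) alpha i *: A ^+ i) A.
  rewrite /GRing.comm mulr_suml mulr_sumr; apply: eq_bigr => k _.
  by rewrite -scalerAl -scalerAr -exprSr -exprS.
have c2 : GRing.comm (eps%:A) A by rewrite /GRing.comm -scalerAl -scalerAr mul1r mulr1.
rewrite hC !TD (T0 _ _ _ _ _ c1) (T0 _ _ _ _ _ c2) !TZ /acomm TAB add0r addr0 in h.
by rewrite -addrA -opprD h opprB addrC subrK.
Qed.

Arguments Xc : simpl never.
Arguments Yc : simpl never.

Definition Phi (W : lmodType algC) (G H : nat -> W) (N i : nat) (a b : nat -> algC) : W :=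
  \sum_(0 <= k < N) (a k *: G (i + k)%N + b k *: H (i + k)%N).
Arguments Phi {W}.

Lemma PhiD (W : lmodType algC) (G H : nat -> W) N i a b a' b' :
  Phi G H N i a b + Phi G H N i a' b' = Phi G H N i (fun k => a k + a' k) (fun k => b k + b' k).
Proof. rewrite /Phi -big_split; apply: eq_bigr => k _; by rewrite !scalerDl addrACA. Qed.
Lemma PhiZ (W : lmodType algC) (G H : nat -> W) N i a b c :
  c *: Phi G H N i a b = Phi G H N i (fun k => c * a k) (fun k => c * b k).
Proof. rewrite /Phi scaler_sumr; apply: eq_bigr => k _; by rewrite scalerDr !scalerA. Qed.
Lemma PhiN (W : lmodType algC) (G H : nat -> W) N i a b :
  - Phi G H N i a b = Phi G H N i (fun k => - a k) (fun k => - b k).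
Proof. rewrite /Phi -sumrN; apply: eq_bigr => k _; by rewrite opprD !scaleNr. Qed.
Lemma Phi_ext (W : lmodType algC) (G H : nat -> W) N i a b a' b' :
  (forall k, a k = a' k) -> (forall k, b k = b' k) -> Phi G H N i a b = Phi G H N i a' b'.
Proof. move=> e1 e2; rewrite /Phi; apply: eq_bigr => k _; by rewrite e1 e2. Qed.
Lemma Phi_shift (W : lmodType algC) (G H : nat -> W) N i a b :
  Phi G H N.+1 i (prevc a) (prevc b) = Phi G H N i.+1 a b.
Proof.
rewrite /Phi big_nat_recl //= !scale0r !add0r; apply: eq_bigr => k _.
by rewrite addSnnS.
Qed.

Lemma mainl (W : algType algC) (L : nat) (alpha : nat -> algC)
    (beta delta eps : algC) (A B C : W) :
  comm A B = C ->
  comm A C = \sum_(1 <= i < L.+2) alpha i *: A ^+ i + delta *: B + eps%:A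
             + beta *: acomm A B ->
  forall j N, (j < N)%N -> forall i,
  T A B i j = Phi (fun k => comm (A ^+ k) B) (fun k => acomm (A ^+ k) C) N i
                  (Yc beta delta j) (fun k => - Xc beta delta j k) /\
  P A C i j = Phi (fun k => comm (A ^+ k) B) (fun k => acomm (A ^+ k) C) N i
                  (Uc beta delta j) (Vc beta delta j).
Proof.
move=> hB hC j; elim: j => [|j IH] N hN i.
- case: N hN => // N _.
  have e0 : forall k, Xc beta delta 0 k = 0 by [].
  have y0 : Yc beta delta 0 0 = 1 by [].
  have y1 : forall k, Yc beta delta 0 k.+1 = 0 by [].
  split; rewrite /Phi big_nat_recl // big1 => [|k _]; rewrite /Uc /Vc /= ?e0 ?y0 ?y1 /=;
    rewrite ?mulr0 ?addr0 ?oppr0 ?scale0r ?scale1r ?addr0 ?add0r ?addn0 //.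
  all: rewrite /T /P /comm /acomm ?expr0 ?mulr1 ?mul1r ?scale1r //.
case: N hN => [|M] hM //.
have hM' : (j < M)%N by [].
have hM2 : (j < M.+1)%N by apply: ltnW.
have ST : forall i, T A B i j.+1 = Phi (fun k => comm (A ^+ k) B) (fun k => acomm (A ^+ k) C)
      M.+1 i (Yc beta delta j.+1) (fun k => - Xc beta delta j.+1 k).
  move=> i'.
  have [S1 P1] := IH M hM' i'.+1.
  have [S0 P0] := IH M.+1 hM2 i'.
  rewrite R1 (_ : A * B - B * A = C) // S1 P0 -Phi_shift PhiN PhiD.
  apply: Phi_ext => k; case: k => [|[|k]] /=; rewrite /Uc /Vc /= ?Xc_S ?Yc_S /=; ring.
split; first exact: ST.
have [S1 P1] := IH M hM' i.+1.
have [S0 P0] := IH M.+1 hM2 i.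
change (P A C i j.+1 = Phi (fun k => comm (A ^+ k) B) (fun k => acomm (A ^+ k) C) M.+1 i (Uc beta delta j.+1) (Vc beta delta j.+1)).
rewrite (R2 _ _ _ _ _ _ _ _ _ hC) ST S1 P1 S0 -!Phi_shift PhiD !PhiZ !PhiN !PhiD.
apply: Phi_ext => k; case: k => [|[|k]] /=; rewrite /Uc /Vc /= ?Xc_S ?Yc_S /=; ring.
Qed.

Theorem lemma4 (V : algType algC) (L : nat) (alpha : nat -> algC)
    (beta delta eps : algC) (A B C : V) :
  comm A B = C ->
  comm A C = \sum_(1 <= i < L.+2) alpha i *: A ^+ i + delta *: B + eps%:A
             + beta *: acomm A B ->
  forall i j : nat, (1 <= j)%N -> (j < i)%N ->
  A ^+ i * B * A ^+ j - A ^+ j * B * A ^+ i =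
    \sum_(0 <= k < j.+1) ybar beta delta k j *: comm (A ^+ (i + k)) B
    - \sum_(0 <= k < j) xbar beta delta k j *: acomm (A ^+ (i + k)) C.
Proof.
move=> hB hC i j hj hij.
have [S _] := mainl V L alpha beta delta eps A B C hB hC j j.+1 (ltnSn j) i.
rewrite -[LHS]/(T A B i j) S /Phi big_split /=.
case: j hj hij S => // j _ _ _.
congr (_ + _).
  by apply: eq_bigr => k _; rewrite (proj2 (agree beta delta j k)).
rewrite [LHS]big_nat_recr //= (proj1 (vanish _ _ j.+1 j.+1)) // oppr0 scale0r addr0 -sumrN.
by apply: eq_bigr => k _; rewrite (proj1 (agree beta delta j k)) scaleNr.
Qed.
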